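(* Let $\alpha\in(\pi/8,3\pi/8)$ with $\alpha/\pi\notin\mathbb{Q}$, $\beta=\alpha-\pi/2$, $\rho=0.01$, $A_1=\rho R(\alpha)$, $A_2=\rho R(\beta)$ where $R(\theta)=\begin{bmatrix}\cos\theta&-\sin\theta\\ \sin\theta&\cos\theta\end{bmatrix}$, and $c(x)=x_1^2+2x_2^2$ on $\mathbb{R}^2$. Let $J^\star$ be the optimal value function, $\tilde J^\star(\theta)=J^\star([\cos\theta,\sin\theta]^\top)$, $\Delta\tilde J^\star(\theta)=\tilde J^\star(\theta+\alpha)-\tilde J^\star(\theta+\beta)$, $\mu=\pi/4-\alpha$, $\delta=0.01$, and let $\nu\in(\mu-\delta,\mu+\delta)$ satisfy $\Delta\tilde J^\star(\nu)=0$. Let $I=[\nu+\beta,\nu+\alpha)$ and $T:I\to I$ be defined by $T(\theta)=\theta+\alpha$ if $\theta<\nu$ and $T(\theta)=\theta+\beta$ if $\theta\geq\nu$. Then for every $\theta\in I$, the backward orbit $\{T^{-1}\theta,T^{-2}\theta,T^{-3}\theta,\ldots\}$ is dense in $I$.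
   Context: $T$ is a bijection of $I$ (an interval exchange map), so $T^{-k}$ is well defined. For the switched linear system $\xi(t+1)=A_{\sigma(t)}\xi(t)$ with $\sigma:\mathbb{N}\to\{1,2\}$, $J^\star(x)=\inf_\sigma\sum_{t=0}^\infty c(\xi(t,x,\sigma))$ where $\xi(t,x,\sigma)$ is the solution with $\xi(0)=x$. *)

(* Defs.v *)
From HB Require Import structures.
From mathcomp Require Import all_boot all_order all_algebra.
From mathcomp Require Import all_classical all_reals all_analysis.
Set Implicit Arguments. Unset Strict Implicit. Unset Printing Implicit Defensive.
Import Order.TTheory GRing.Theory Num.Theory.
Import numFieldNormedType.Exports.
Local Open Scope classical_set_scope.
Local Open Scope ring_scope.

Section Defs.
Variable R : realType.

Definition rho : R := 1 / 100.
Definition rotA (th : R) (x : R * R) : R * R :=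
  (rho * (cos th * x.1 - sin th * x.2), rho * (sin th * x.1 + cos th * x.2)).

Definition beta_of (al : R) : R := al - pi / 2.

Definition Amode (al : R) (i : bool) : R * R -> R * R :=
  if i then rotA al else rotA (beta_of al).

Fixpoint traj (al : R) (sigma : nat -> bool) (x : R * R) (t : nat) : R * R :=
  match t with
  | O => x
  | S t' => Amode al (sigma t') (traj al sigma x t')
  end.

Definition cost (x : R * R) : R := x.1 ^+ 2 + 2 * x.2 ^+ 2.

Definition Jstar (al : R) (x : R * R) : \bar R :=
  ereal_inf [set (\sum_(0 <= t <oo) (cost (traj al sigma x t))%:E)%E
            | sigma in [set: nat -> bool]].

Definition Jtilde (al : R) (th : R) : \bar R := Jstar al (cos th, sin th).

Definition DeltaJ (al : R) (th : R) : \bar R :=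
  (Jtilde al (th + al) - Jtilde al (th + beta_of al))%E.

Definition Iset (al nu : R) : set R :=
  [set th | nu + beta_of al <= th < nu + al].

Definition Tmap (al nu : R) (th : R) : R :=
  if th < nu then th + al else th + beta_of al.

(* backward orbit {T^-1 th, T^-2 th, ...}: the points phi of I with
   T^k phi = th for some k >= 1 (T is a bijection of I) *)
Definition backward_orbit (al nu th : R) : set R :=
  [set phi | Iset al nu phi /\ exists k : nat, iter k.+1 (Tmap al nu) phi = th].

End Defs.

(* Main.v *)
Require Import Defs.
From HB Require Import structures.
From mathcomp Require Import all_boot all_order all_algebra.
From mathcomp Require Import all_classical all_reals all_analysis.
From mathcomp Require Import ring lra zify.
Import Order.TTheory GRing.Theory Num.Theory.
Import numFieldNormedType.Exports.
Local Open Scope classical_set_scope.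
Local Open Scope ring_scope.

Set Implicit Arguments.
Section Aux.
Context {R : realType}.
Variable L : R.
Hypothesis L0 : 0 < L.

Definition cong (a b : R) := exists m : int, a - b = m%:~R * L.
Definition fr (y : R) : R := y - (Num.floor (y / L))%:~R * L.

Lemma cong_refl a : cong a a.
Proof. by exists 0; rewrite subrr mul0r. Qed.
Lemma cong_sym a b : cong a b -> cong b a.
Proof. by move=> [m hm]; exists (- m); rewrite mulrNz mulNr -hm opprB. Qed.
Lemma cong_trans a b c : cong a b -> cong b c -> cong a c.
Proof.
move=> [m hm] [n hn]; exists (m + n); rewrite intrD mulrDl -hm -hn; lra.
Qed.
Lemma cong_add a b c d : cong a b -> cong c d -> cong (a + c) (b + d).
Proof.
move=> [m hm] [n hn]; exists (m + n); rewrite intrD mulrDl -hm -hn; lra.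
Qed.
Lemma cong_opp a b : cong a b -> cong (- a) (- b).
Proof. by move=> [m hm]; exists (- m); rewrite mulrNz mulNr -hm opprB opprK addrC. Qed.
Lemma cong_muln a b (k : nat) : cong a b -> cong (k%:R * a) (k%:R * b).
Proof.
move=> [m hm]; exists (m * k%:Z); rewrite -mulrBr hm intrM.
have -> : (k%:Z)%:~R = (k%:R : R) by [].
by rewrite mulrCA mulrA.
Qed.

Arguments cong_sym {a b}.
Arguments cong_trans {a b c}.
Arguments cong_add {a b c d}.
Arguments cong_opp {a b}.
Arguments cong_muln {a b}.

Lemma fr_itv y : 0 <= fr y < L.
Proof.
have /andP[h1 h2] := floor_itv (y / L).
rewrite /fr; apply/andP; split.
  rewrite subr_ge0 -ler_pdivlMr //.
rewrite intrD ltr_pdivrMr // in h2.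
lra.
Qed.

Lemma fr_cong y : cong (fr y) y.
Proof. exists (- Num.floor (y / L)); rewrite /fr mulrNz mulNr; lra. Qed.

Lemma int_small (m : int) : `|(m%:~R : R)| < 1 -> m = 0.
Proof.
move=> h; apply/eqP; apply: contraTT h => hm.
rewrite -intr_norm -leNgt ler1z.
by rewrite -normr_gt0 in hm.
Qed.

Lemma fr_uniq z y : 0 <= z < L -> cong z y -> fr y = z.
Proof.
move=> /andP[z0 zL] hc.
have [m hm] := cong_trans (fr_cong y) (cong_sym hc).
have /andP[f0 fL] := fr_itv y.
have : `|(m%:~R : R)| < 1.
  have h : `|m%:~R * L| < L by rewrite -hm ltr_norml; apply/andP; split; lra.
  by rewrite normrM (gtr0_norm L0) -ltr_pdivlMr // divff ?gt_eqF in h.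
move=> /int_small hm0; move: hm; rewrite hm0 mul0r; lra.
Qed.

Lemma cong_fr a b : cong a b -> fr a = fr b.
Proof.
move=> h; apply: fr_uniq; first exact: fr_itv.
exact: cong_trans (fr_cong b) (cong_sym h).
Qed.

Lemma cong_fr_inv a b : fr a = fr b -> cong a b.
Proof.
move=> h; apply: cong_trans (cong_sym (fr_cong a)) _.
by rewrite h; apply: fr_cong.
Qed.

Lemma approx (c d t : R) : d != 0 -> 0 <= c < L -> 0 <= t -> t + `|d| <= L ->
  exists (k : nat) (m : int), t <= c + k%:R * d - m%:~R * L < t + `|d|.
Proof.
move=> d0 /andP[c0 cL] t0 tL.
case: (ltgtP d 0) => hd; last by rewrite hd eqxx in d0.
-
  rewrite ltr0_norm // in tL *.
  set z := c - t + L.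
  have z0 : 0 <= z / - d by apply: divr_ge0; rewrite /z; lra.
  have fz0 : 0 <= Num.floor (z / - d) by rewrite floor_ge0.
  exists `|Num.floor (z / - d)|%N, (-1).
  rewrite natr_absz ger0_norm //.
  have /andP[h1 h2] := floor_itv (z / - d).
  rewrite intrD in h2.
  rewrite ler_pdivlMr ?oppr_gt0 // in h1.
  rewrite ltr_pdivrMr ?oppr_gt0 // in h2.
  move: h1 h2; set F := (Num.floor _)%:~R; rewrite /z => h1 h2.
  apply/andP; split; nra.
-
  rewrite gtr0_norm // in tL *.
  set z := t + L - c.
  have z0 : 0 <= z / d by apply: divr_ge0; rewrite /z; lra.
  have fz0 : 0 <= Num.ceil (z / d) by rewrite ceil_ge0; lra.
  exists `|Num.ceil (z / d)|%N, 1.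
  rewrite natr_absz ger0_norm //.
  have /andP[h1 h2] := ceil_itv (z / d).
  rewrite intrB in h1.
  rewrite ltr_pdivlMr // in h1.
  rewrite ler_pdivrMr // in h2.
  move: h1 h2; set F := (Num.ceil _)%:~R; rewrite /z => h1 h2.
  apply/andP; split; nra.
Qed.

End Aux.

Arguments cong_refl {R L}.

Lemma Tstep (R : realType) (al nu y : R) : 0 < al < pi / 2 ->
  Tmap al nu (nu + beta_of al + fr (pi / 2) y) =
  nu + beta_of al + fr (pi / 2) (y + al).
Proof.
move=> /andP[a0 aL].
have L0 : 0 < pi / 2 :> R by rewrite divr_gt0 // pi_gt0.
have /andP[f0 fL] := fr_itv _ L0 y.
have hc := fr_cong (pi / 2) y.
rewrite /Tmap /beta_of; case: ifP => h.
- rewrite (@fr_uniq _ _ L0 (fr (pi/2) y + al) (y + al)); first lra.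
    apply/andP; split; lra.
  exact: cong_add hc (cong_refl _).
- rewrite (@fr_uniq _ _ L0 (fr (pi/2) y + al - pi / 2) (y + al)); first lra.
    move/negbT: h; rewrite -leNgt => h; apply/andP; split; lra.
  have [m hm] := hc; exists (m - 1); rewrite intrB mulrBl -hm; lra.
Qed.

Lemma Titer (R : realType) (al nu y : R) (n : nat) : 0 < al < pi / 2 ->
  iter n (Tmap al nu) (nu + beta_of al + fr (pi / 2) y) =
  nu + beta_of al + fr (pi / 2) (y + n%:R * al).
Proof.
move=> ha; elim: n => [|n IH]; first by rewrite mul0r addr0.
by rewrite iterS IH Tstep //; congr (_ + fr _ _); rewrite -addn1 natrD; lra.
Qed.

Unset Implicit Arguments.

Theorem lemma9 (R : realType) (al nu : R) :
  pi / 8 < al < 3 * pi / 8 ->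
  ~ (exists q : rat, al / pi = ratr q) ->
  (pi / 4 - al) - 1 / 100 < nu < (pi / 4 - al) + 1 / 100 ->
  DeltaJ al nu = 0%E ->
  forall th, Iset al nu th ->
    Iset al nu `<=` closure (backward_orbit al nu th).
Proof.
move=> /andP[ha1 ha2] hirr _ _ th hth x hx.
have pi0 : 0 < pi :> R := pi_gt0 R.
have L0 : 0 < pi / 2 :> R by rewrite divr_gt0.
have al0 : 0 < al by lra.
have aL : al < pi / 2 by lra.
have ha : 0 < al < pi / 2 by apply/andP.
have hu0 : 0 <= th - (nu + beta_of al) < pi / 2.
  by move: hth; rewrite /Iset /beta_of /= => /andP[h1 h2]; apply/andP; split; lra.
pose g n := fr (pi / 2) (th - (nu + beta_of al) - n%:R * al).
have hg : forall n, iter n (Tmap al nu) (nu + beta_of al + g n) = th.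
  move=> n; rewrite /g Titer // subrK (fr_uniq L0 hu0 (cong_refl _)); lra.
have gI : forall n, 0 <= g n < pi / 2 := fun n => fr_itv _ L0 _.
have gcong : forall n, cong (pi / 2) (g n) (th - (nu + beta_of al) - n%:R * al) :=
  fun n => fr_cong _ _.
move=> B /nbhs_ballP [e /= e0 heB].
suff [phi [hphi hd]] : exists phi, backward_orbit al nu th phi /\ `|x - phi| < e.
  by exists phi; split => //; apply: heB.
suff key : forall a b : nat, (a < b)%N -> `|g a - g b| < e ->
    exists phi, backward_orbit al nu th phi /\ `|x - phi| < e.
  pose N := (Num.trunc (pi / 2 / e)).+1.
  have hN : pi / 2 / e < N%:R := truncnS_gt _.
  have N0 : (0:R) < N%:R by rewrite ltr0n.
  pose c : R := N%:R / (pi / 2).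
  have c0 : 0 < c by rewrite divr_gt0.
  have ce : 1 < c * e.
    rewrite ltr_pdivrMr // in hN.
    by rewrite /c mulrAC ltr_pdivlMr ?mul1r.
  have q0 : forall n, 0 <= g n * c.
    by move=> n; have /andP[? ?] := gI n; rewrite mulr_ge0 // ltW.
  pose h n := Num.trunc (g n * c).
  have hlt : forall n, (h n < N)%N.
    move=> n; have /andP[g0 gL] := gI n.
    rewrite /h truncn_lt_nat // /c mulrA ltr_pdivrMr //; nra.
  pose f : 'I_N.+1 -> 'I_N := fun i => inord (h i).
  have [i [j [hij hf]]] : exists i j : 'I_N.+1, i != j /\ f i = f j.
    case: (pselect (exists i j : 'I_N.+1, i != j /\ f i = f j)) => // nex.
    have inj : injective f.
      move=> i j hij; apply/eqP; apply: contraT => hne; exfalso; apply: nex.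
      by exists i, j.
    by have := leq_card f inj; rewrite !card_ord ltnn.
  have hij' : h i = h j.
    by have := congr1 val hf; rewrite /f /= !inordK //; apply: hlt.
  have hclose : forall a b : nat, h a = h b -> `|g a - g b| < e.
    move=> a' b' hab'.
    have := truncn_itv (q0 a'); have := truncn_itv (q0 b').
    rewrite -/(h a') -/(h b') hab' => /andP[h1 h2] /andP[h3 h4].
    move: h1 h2 h3 h4; set T := (h b')%:R => h1 h2 h3 h4.
    rewrite ltr_norml; apply/andP; split; nra.
  case: (ltngtP i j) => hlt'.
  - exact: key hlt' (hclose _ _ hij').
  - by apply: key hlt' _; rewrite distrC; apply: hclose; rewrite hij'.
  - have hh : i = j by apply: val_inj.
    by rewrite hh eqxx in hij.
move=> a b hab hd.
pose p := (b - a)%N.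
have p0 : (0 < p)%N by rewrite subn_gt0.
have p0r : (0 : R) < p%:R by rewrite ltr0n.
pose d := g b - g a.
have hdc : cong (pi / 2) d (- (p%:R * al)).
  have := cong_add (gcong b) (cong_opp (gcong a)).
  suff -> : - (p%:R * al) = th - (nu + beta_of al) - b%:R * al + - (th - (nu + beta_of al) - a%:R * al) by [].
  rewrite /p natrB ?(ltnW hab) //; lra.
have d0 : d != 0.
  apply/negP => /eqP dz; apply: hirr; move: hdc; rewrite dz => -[m hm].
  exists (m%:~R / (2 * p)%:R).
  rewrite fmorph_div /= ratr_int ratr_nat natrM.
  have -> : al = m%:~R * (pi / 2) / p%:R by rewrite -hm; field; rewrite gt_eqF.
  move: pi0; generalize (pi : R) => P P0; field; rewrite ?gt_eqF //.
have dpos : 0 < `|d| by rewrite normr_gt0.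
have dL : `|d| < pi / 2.
  have := gI a; have := gI b; move=> /andP[? ?] /andP[? ?].
  rewrite /d ltr_norml; apply/andP; split; lra.
have de : `|d| < e by rewrite /d distrC.
have ht : 0 <= x - (nu + beta_of al) < pi / 2.
  by move: hx; rewrite /Iset /beta_of /= => /andP[h1 h2]; apply/andP; split; lra.
move: ht => /andP[ht0 htL].
have [t' [t0 [tL tt]]] : exists t', 0 <= t' /\ t' + `|d| <= pi / 2 /\ t' <= x - (nu + beta_of al) < t' + `|d|.
  case: (lerP (x - (nu + beta_of al) + `|d|) (pi / 2)) => h.
    by exists (x - (nu + beta_of al)); split => //; split => //; apply/andP; split; lra.
  by exists (pi / 2 - `|d|); split; [lra | split; [lra | apply/andP; split; lra]].
have [k [m hkm]] := approx (pi / 2) (g 1%N) d t' d0 (gI 1%N) t0 tL.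
pose w := g 1%N + k%:R * d - m%:~R * (pi / 2).
have hw : g (k * p).+1 = w.
  rewrite /g; apply: (fr_uniq L0).
    by move: hkm; rewrite -/w => /andP[h1 h2]; apply/andP; split; lra.
  have h1 := cong_add (gcong 1%N) (cong_muln k hdc).
  have h2 : cong (pi / 2) w (g 1%N + k%:R * d) by exists (- m); rewrite /w mulrNz mulNr; lra.
  have := cong_trans h2 h1.
  suff -> : th - (nu + beta_of al) - (k * p).+1%:R * al =
    th - (nu + beta_of al) - 1%:R * al + k%:R * - (p%:R * al) by [].
  rewrite -addn1 natrD natrM; ring.
exists (nu + beta_of al + w); split.
  split.
    move: hkm; rewrite -/w /Iset /beta_of /= => /andP[h1 h2]; apply/andP; split; lra.
  by exists (k * p)%N; rewrite -hw; apply: hg.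
move: hkm tt; rewrite -/w => /andP[h1 h2] /andP[h3 h4].
rewrite ltr_norml; apply/andP; split; lra.
Qed.
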